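(* Let $n$ be a positive integer, let $\mathcal{T}_n$ be the transducer defined below and let $\mathcal{T}'_n$ be the trimmed result of the specialized determinization of $\mathcal{T}_n$. Then: (1) $\mathcal{T}'_n$ has at least $(2n+3)2^{n-2}$ states; (2) the accessible subset-construction determinization of the underlying automaton of $\mathcal{T}'_n$ has at least $n!+2$ states; (3) the accessible subset-construction determinization of the reversed underlying automaton of $\mathcal{T}'_n$ has at least $2^n+n$ states.
   Context: Let $\Sigma_n=\{a_1,\dots,a_n\}$ and let the output monoid be the free monoid $\{1\}^*$. $\mathcal{T}_n=\langle\Sigma_n^*\times\{1\}^*,Q,\{s\},\{f\},\Delta_n\rangle$ with $Q=\{s,q_1,\dots,q_n,f\}$ and $\Delta_n=\Delta_{s,n}\cup\Delta_{Q_n}\cup\Delta_{f,n}$ where: $\Delta_{s,n}=\{\langle s,\langle a_j,1^{i-1}\rangle,q_i\rangle:1\le i,j\le n\}$; $\Delta_{Q_n}$ consists, for all $1\le i,j\le n$, of $\langle q_i,\langle a_j,1^n\rangle,q_i\rangle$ if $i\notin\{1,j\}$, $\langle q_1,\langle a_j,1^{n+j-1}\rangle,q_j\rangle$ if $i=1$, and $\langle q_j,\langle a_j,1^{n-j+1}\rangle,q_1\rangle$ if $i=j\neq1$; $\Delta_{f,n}=\{\langle q_i,\langle a_j,1^{2n-i+1}\rangle,f\rangle:1\le j\le i\le n\}$. Specialized determinization (for a transducer with single initial state $i$ over $\Sigma\times\Omega^*$; here $\Omega=\{1\}$ with strict lexicographic order $1^k\prec1^l$ iff $k<l$): states are pairs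 $\langle p,N\rangle\in Q\times2^Q$, generated inductively from $\langle i,\emptyset\rangle$: for a generated $\langle p,N\rangle$ and $\langle p,\langle a,v\rangle,p'\rangle\in\Delta$ let $N'=\{q':\exists q\in N,\exists v'\ \langle q,\langle a,v'\rangle,q'\rangle\in\Delta\}\cup\{q:\exists v'\prec v\ \langle p,\langle a,v'\rangle,q\rangle\in\Delta\}$; if $p'\notin N'$ add state $\langle p',N'\rangle$ and transition $\langle\langle p,N\rangle,\langle a,v\rangle,\langle p',N'\rangle\rangle$. Final states are $\{\langle f,N\rangle:f\in F,\ N\cap F=\emptyset\}$. Trimming keeps only accessible and co-accessible states. The underlying automaton of a transducer is the automaton over $\Sigma$ with transitions $\langle p,a,q\rangle$ for each $\langle p,\langle a,m\rangle,q\rangle\in\Delta$ (same states, initial and final states); its reversal swaps initial and final states and reverses transitions. The accessible subset-construction determinization has as states the subsets reachable from the set of initial states via $\delta(P,a)=\{q:\exists p\in P\ \langle p,a,q\rangle\}$. *)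

(* Defs.v *)
From mathcomp Require Import all_boot.
Set Implicit Arguments. Unset Strict Implicit. Unset Printing Implicit Defensive.

(* An output word 1^k is represented by its length k : nat; the strict      *)
(* lexicographic order 1^k < 1^l is then k < l.                              *)
Record transducer (Q A : Type) := Transducer {
  tstate : Q -> Prop;
  tinit  : Q -> Prop;
  tfinal : Q -> Prop;
  ttrans : Q -> A -> nat -> Q -> Prop
}.

Record automaton (Q A : Type) := Automaton {
  astate : Q -> Prop;
  ainit  : Q -> Prop;
  afinal : Q -> Prop;
  atrans : Q -> A -> Q -> Prop
}.

(* States Q = {s, q_1, ..., q_n, f} encoded as 'I_(n+2):
     s = 0, q_i = i (1 <= i <= n), f = n+1.
   Letters Sigma_n = {a_1, ..., a_n} encoded as 'I_n: a_j = j-1. *)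
Definition Tstate (n : nat) := 'I_n.+2.
Definition Tletter (n : nat) := 'I_n.

Definition st_s (n : nat) : Tstate n := ord0.
Definition st_f (n : nat) : Tstate n := ord_max.

(* Delta_n on the nat encodings: p, p' states, j letter index (1..n), m output length *)
Definition Tdelta_nat (n p j m p' : nat) : bool :=
  [|| (* Delta_{s,n}: <s, <a_j, 1^(i-1)>, q_i>, here i = p' *)
      [&& p == 0, 1 <= p' <= n & m == p'.-1],
      (* Delta_{Q_n}, case i notin {1, j}: <q_i, <a_j, 1^n>, q_i> *)
      [&& 1 <= p <= n, p != 1, p != j, p' == p & m == n],
      (* case i = 1: <q_1, <a_j, 1^(n+j-1)>, q_j> *)
      [&& p == 1, p' == j & m == n + j - 1],
      (* case i = j <> 1: <q_j, <a_j, 1^(n-j+1)>, q_1> *)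
      [&& 1 <= p <= n, p != 1, p == j, p' == 1 & m == n - j + 1]
    | (* Delta_{f,n}: <q_i, <a_j, 1^(2n-i+1)>, f> for j <= i *)
      [&& 1 <= p <= n, j <= p, p' == n.+1 & m == 2 * n - p + 1] ].

Definition Tdelta (n : nat) (p : Tstate n) (a : Tletter n) (m : nat) (p' : Tstate n)
  : Prop := Tdelta_nat n p a.+1 m p'.

Definition T_ (n : nat) : transducer (Tstate n) (Tletter n) :=
  Transducer (fun _ => True) (fun q => q = st_s n) (fun q => q = st_f n) (@Tdelta n).

Section Det.
Variables (Q : finType) (A : Type).

Definition det_step (T : transducer Q A) (x : Q * {set Q}) (a : A) (v : nat)
    (y : Q * {set Q}) : Prop :=
  [/\ ttrans T x.1 a v y.1,
      (forall q', q' \in y.2 <->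
         ((exists2 q, q \in x.2 & exists v', ttrans T q a v' q') \/
          (exists v', v' < v /\ ttrans T x.1 a v' q')))
    & y.1 \notin y.2].

Inductive det_gen (T : transducer Q A) (i : Q) : Q * {set Q} -> Prop :=
| det_gen0 : det_gen T i (i, set0)
| det_genS x a v y : det_gen T i x -> det_step T x a v y -> det_gen T i y.

Definition det (T : transducer Q A) (i : Q) : transducer (Q * {set Q}) A :=
  Transducer (det_gen T i)
    (fun x => x = (i, set0))
    (fun x => [/\ det_gen T i x, tfinal T x.1 & forall q, q \in x.2 -> ~ tfinal T q])
    (fun x a v y => det_gen T i x /\ det_step T x a v y).
End Det.

Section Trim.
Variables (Q A : Type) (T : transducer Q A).

Inductive accessible : Q -> Prop :=
| acc0 q : tstate T q -> tinit T q -> accessible q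
| accS p a v q : accessible p -> ttrans T p a v q -> accessible q.

Inductive coaccessible : Q -> Prop :=
| coacc0 q : tstate T q -> tfinal T q -> coaccessible q
| coaccS p a v q : ttrans T p a v q -> coaccessible q -> coaccessible p.

Definition kept (q : Q) : Prop := [/\ tstate T q, accessible q & coaccessible q].

Definition trim : transducer Q A :=
  Transducer kept
    (fun q => tinit T q /\ kept q)
    (fun q => tfinal T q /\ kept q)
    (fun p a v q => [/\ ttrans T p a v q, kept p & kept q]).
End Trim.

Definition underlying (Q A : Type) (T : transducer Q A) : automaton Q A :=
  Automaton (tstate T) (tinit T) (tfinal T) (fun p a q => exists m, ttrans T p a m q).

Definition reversal (Q A : Type) (M : automaton Q A) : automaton Q A :=
  Automaton (astate M) (afinal M) (ainit M) (fun p a q => atrans M q a p).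

Inductive subset_reach (Q : finType) (A : Type) (M : automaton Q A) : {set Q} -> Prop :=
| sr_init (P : {set Q}) : (forall q, q \in P <-> (astate M q /\ ainit M q)) -> subset_reach M P
| sr_step (P : {set Q}) a (P' : {set Q}) : subset_reach M P ->
    (forall q, q \in P' <-> exists2 p, p \in P & atrans M p a q) -> subset_reach M P'.

Definition T'_ (n : nat) : transducer (Tstate n * {set Tstate n}) (Tletter n) :=
  trim (det (T_ n) (st_s n)).

(* Main.v *)
Require Import Defs.
From mathcomp Require Import all_boot fingroup perm zify.
From Stdlib Require Import ClassicalEpsilon.
Set Implicit Arguments. Unset Strict Implicit. Unset Printing Implicit Defensive.

Lemma exists_perm (T : finType) (A B : {set T}) : #|A| = #|B| -> exists r : {perm T}, r @: A = B.
Proof.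
move=> hAB.
set s := enum A ++ enum (~: A); set t := enum B ++ enum (~: B).
have ss : size s = #|T| by rewrite size_cat -!cardE cardsC.
have st : size t = #|T| by rewrite size_cat -!cardE cardsC.
have ut : uniq t.
  rewrite cat_uniq !enum_uniq andbT /=; by apply/hasPn => x; rewrite !mem_enum inE.
have ins : forall x, x \in s by move=> x; rewrite mem_cat !mem_enum inE; case: (x \in A).
pose f x := nth x t (index x s).
have finj : injective f.
  move=> x y e.
  have ix : index x s < size t by rewrite st -ss index_mem ins.
  have iy : index y s < size t by rewrite st -ss index_mem ins.
  move: e; rewrite /f (set_nth_default y x ix) => /eqP; rewrite nth_uniq // => /eqP e.
  by rewrite -(nth_index x (ins x)) e nth_index.
exists (perm finj); apply/eqP; rewrite eqEcard card_imset ?hAB ?leqnn ?andbT; last exact: perm_inj.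
apply/subsetP => y /imsetP [x xA ->]; rewrite permE /f /s index_cat mem_enum xA /t nth_cat.
have ixA : index x (enum A) < size (enum B) by rewrite -cardE -hAB cardE index_mem mem_enum.
by rewrite ixA -(mem_enum B); apply: mem_nth.
Qed.

Definition pb (P : Prop) : bool := if excluded_middle_informative P then true else false.
Lemma pbP (P : Prop) : pb P <-> P.
Proof. by rewrite /pb; case: excluded_middle_informative. Qed.

Section Main.
Variable m : nat.
Local Notation n := m.+1.

Lemma Td_q (k j q v : nat) : k < n -> j < n -> q < n.+2 ->
  Tdelta_nat n k.+1 j.+1 v q =
  [|| [&& k == 0, q == j.+1 & v == n + j],
      [&& k != 0, k == j, q == 1 & v == n - j],
      [&& k != 0, k != j, q == k.+1 & v == n] |
      [&& q == n.+1, j <= k & v == 2 * n - k]].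
Proof.
rewrite /Tdelta_nat => hk hj hq.
have -> : (k.+1 == 0) = false by [].
have -> : (1 <= k.+1 <= n) = true by lia.
rewrite /= eqSS.
case: (k =P 0) => [->|/eqP k0] /=.
  lia.
lia.
Qed.

Lemma Td_s (j q v : nat) :
  Tdelta_nat n 0 j.+1 v q = [&& 1 <= q <= n & v == q.-1].
Proof. by rewrite /Tdelta_nat /= orbF. Qed.

Lemma Td_f (j q v : nat) : Tdelta_nat n n.+1 j.+1 v q = false.
Proof. rewrite /Tdelta_nat /=. have -> : (n.+1 <= n) = false by lia. by []. Qed.

Implicit Types (p k : 'I_n) (N M : {set 'I_n}) (b : bool) (j : 'I_n) (y : (Tstate n * {set Tstate n})).

Definition qst (k : 'I_n) : Tstate n := inord k.+1.
Lemma val_qst k : nat_of_ord (qst k) = k.+1.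
Proof. rewrite /qst inordK //; have := ltn_ord k; lia. Qed.
Lemma qst_inj : injective qst.
Proof. move=> a b h; apply: val_inj; have := val_qst a; rewrite h val_qst /=; lia. Qed.
Lemma qst_f k : (qst k == st_f n) = false.
Proof. apply/negbTE; rewrite -val_eqE /= val_qst; have := ltn_ord k; lia. Qed.
Lemma qst_s k : (qst k == st_s n) = false.
Proof. by apply/negbTE; rewrite -val_eqE /= val_qst. Qed.
Lemma f_s : (st_f n == st_s n) = false.
Proof. by []. Qed.

Definition sg (j : 'I_n) : {perm 'I_n} := tperm ord0 j.
Lemma sgE j k : nat_of_ord (sg j k) = if nat_of_ord k == 0 then nat_of_ord j else if nat_of_ord k == nat_of_ord j then 0 else nat_of_ord k.
Proof.
rewrite /sg; case: tpermP => [->|->|h1 h2] /=; first by []; first by rewrite eqxx; case: (_ =P 0).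
rewrite ifN; last by apply/eqP => e; apply: h1; exact: val_inj.
by rewrite ifN //; apply/eqP => e; apply: h2; exact: val_inj.
Qed.
Lemma sg0 : sg ord0 = 1%g.
Proof. by rewrite /sg tperm1. Qed.
Lemma sgK j : involutive (sg j).
Proof. exact: tpermK. Qed.

Definition vq (k j : 'I_n) : nat := if nat_of_ord k == 0 then n + j else if nat_of_ord k == nat_of_ord j then n - j else n.

Lemma Tq k j v q' : Tdelta (qst k) j v q' =
  ((q' == qst (sg j k)) && (v == vq k j)) || [&& q' == st_f n, j <= k & v == 2 * n - k].
Proof.
rewrite /Tdelta val_qst Td_q //.
have -> : (q' == qst (sg j k)) = (nat_of_ord q' == (sg j k).+1) by rewrite -val_eqE /= val_qst.
have -> : (q' == st_f n) = (nat_of_ord q' == n.+1) by rewrite -val_eqE.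
rewrite sgE /vq; case E1: (nat_of_ord k == 0); case E2: (nat_of_ord k == nat_of_ord j); by [].
Qed.

Lemma Ts j v q' : Tdelta (st_s n) j v q' = [&& 1 <= q' <= n & v == q'.-1].
Proof. by rewrite /Tdelta /= Td_s. Qed.
Lemma Tf j v q' : Tdelta (st_f n) j v q' = false.
Proof. by rewrite /Tdelta /= Td_f. Qed.

Definition mkS (N : {set 'I_n}) (b : bool) : {set Tstate n} :=
  qst @: N :|: (if b then [set st_f n] else set0).

Lemma qst_mkS k N b : (qst k \in mkS N b) = (k \in N).
Proof. rewrite /mkS inE mem_imset; last exact: qst_inj. by case: b; rewrite ?inE ?qst_f orbF. Qed.
Lemma f_mkS N b : (st_f n \in mkS N b) = b.
Proof.
rewrite /mkS inE; case: b; first by rewrite in_set1 eqxx orbT.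
rewrite in_set0 orbF; by apply/negbTE/imsetP => -[k _ e]; move: (qst_f k); rewrite -e eqxx.
Qed.
Lemma s_mkS N b : (st_s n \in mkS N b) = false.
Proof.
rewrite /mkS inE; apply/negbTE; rewrite negb_or; apply/andP; split.
  by apply/imsetP => -[k _ e]; move: (qst_s k); rewrite -e eqxx.
by case: b; rewrite ?inE.
Qed.
Lemma mkSP q N b : q \in mkS N b -> (q = st_f n /\ b) \/ (exists2 k, k \in N & q = qst k).
Proof.
rewrite /mkS inE => /orP [/imsetP [k kN ->]|]; first by right; exists k.
by case: b; rewrite ?inE // => /eqP ->; left.
Qed.
Lemma mkS_false N : mkS N false = qst @: N.
Proof. by rewrite /mkS setU0. Qed.
Lemma mkS_inj N b N' b' : mkS N b = mkS N' b' -> N = N' /\ b = b'.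
Proof.
move=> e; split; last by rewrite -(f_mkS N b) e f_mkS.
by apply/setP => k; rewrite -(qst_mkS k N b) e qst_mkS.
Qed.

Definition flag (N : {set 'I_n}) (j : 'I_n) := [exists k in N, j <= k].
Lemma flag0 j : flag set0 j = false.
Proof. by apply/negbTE/existsP => -[k]; rewrite inE. Qed.
Lemma flag_ord0 N : flag N ord0 = (N != set0).
Proof.
apply/idP/idP => [/existsP [k /andP [kN _]]|/set0Pn [k kN]]; first by apply/set0Pn; exists k.
by apply/existsP; exists k; rewrite kN.
Qed.

Definition RHS (Q : finType) (A : Type) (T : transducer Q A) (x : Q * {set Q}) (a : A) (v : nat) (q' : Q) :=
  (exists2 q, q \in x.2 & exists v', ttrans T q a v' q') \/ (exists v', v' < v /\ ttrans T x.1 a v' q').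

Lemma det_stepE (Q : finType) (A : Type) (T : transducer Q A) x a v (y : Q * {set Q}) (Y : {set Q}) :
  (forall q', q' \in Y <-> RHS T x a v q') ->
  det_step T x a v y <-> [/\ ttrans T x.1 a v y.1, y.2 = Y & y.1 \notin Y].
Proof.
move=> HY; split => [[h1 h2 h3]|[h1 h2 h3]].
  have e : y.2 = Y by apply/setP => q; apply/idP/idP => H; [apply/HY/h2 | apply/h2/HY].
  by split; rewrite -?e.
split => //; last by rewrite h2.
move=> q'; rewrite h2; exact: HY.
Qed.

Arguments det_stepE {Q A T x a v y Y}.

Lemma succ_q N b j (q' : Tstate n) :
  (exists2 q, q \in mkS N b & exists v', Tdelta q j v' q') <-> q' \in mkS (sg j @: N) (flag N j).
Proof.
split.
- move=> [q /mkSP [[-> _]|[k kN ->]] [v' H]]; first by rewrite Tf in H.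
  move: H; rewrite Tq => /orP [/andP [/eqP -> _] | /and3P [/eqP -> jk _]].
    by rewrite qst_mkS; apply: imset_f.
  by rewrite f_mkS; apply/existsP; exists k; rewrite kN jk.
- move/mkSP => [[-> /existsP [k /andP [kN jk]]] | [k' /imsetP [k kN ->] ->]].
    exists (qst k); first by rewrite qst_mkS.
    by exists (2 * n - k); rewrite Tq eqxx jk /= eqxx orbT.
  exists (qst k); first by rewrite qst_mkS.
  by exists (vq k j); rewrite Tq !eqxx.
Qed.

Lemma vq_lt p j : vq p j < 2 * n - p.
Proof. rewrite /vq; have := ltn_ord p; have := ltn_ord j; case: (nat_of_ord p =P 0); case: (nat_of_ord p =P nat_of_ord j); lia. Qed.

Lemma RHS_q p N b j (q' : Tstate n) :
  q' \in mkS (sg j @: N) (flag N j) <-> RHS (T_ n) (qst p, mkS N b) j (vq p j) q'.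
Proof.
rewrite /RHS /= -(succ_q N b); split => [H|[H|[v' [lt H]]]]; [by left | exact: H | exfalso].
move: H; rewrite Tq => /orP [/andP [_ /eqP e]|/and3P [_ _ /eqP e]]; move: lt; rewrite e ?ltnn //.
by move=> h; have := vq_lt p j; lia.
Qed.

Lemma RHS_f p N b j (q' : Tstate n) :
  q' \in mkS (sg j @: N) (flag N j) :|: [set qst (sg j p)] <-> RHS (T_ n) (qst p, mkS N b) j (2 * n - p) q'.
Proof.
rewrite /RHS /= in_setU; split => [/orP [H|/set1P ->]|[H|[v' [lt H]]]].
- by left; apply/(succ_q N b).
- by right; exists (vq p j); split; [exact: vq_lt | rewrite /= Tq !eqxx].
- by apply/orP; left; apply/(succ_q N b).
- move: H; rewrite /= Tq => /orP [/andP [/eqP -> _]|/and3P [_ _ /eqP e]].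
    by rewrite set11 orbT.
  by move: lt; rewrite e ltnn.
Qed.

Definition qmove p N j := (qst (sg j p), mkS (sg j @: N) (flag N j)).
Definition fmove p N j := (st_f n, qst @: (sg j @: (p |: N))).

Lemma step_q p N b j : p \notin N -> det_step (T_ n) (qst p, mkS N b) j (vq p j) (qmove p N j).
Proof.
move=> pN; apply/(det_stepE (fun q' => RHS_q p N b j q')); split => //=.
  by rewrite Tq !eqxx.
by rewrite qst_mkS mem_imset //; exact: perm_inj.
Qed.

Lemma fmove_eq p N j : ~~ flag N j ->
  mkS (sg j @: N) (flag N j) :|: [set qst (sg j p)] = qst @: (sg j @: (p |: N)).
Proof. by move/negbTE => ->; rewrite mkS_false !imsetU1 setUC. Qed.

Lemma step_f p N b j : j <= p -> ~~ flag N j ->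
  det_step (T_ n) (qst p, mkS N b) j (2 * n - p) (fmove p N j).
Proof.
move=> jp fl; apply/(det_stepE (fun q' => RHS_f p N b j q')); split => //=.
- by rewrite Tq jp !eqxx orbT.
- by rewrite fmove_eq.
- rewrite fmove_eq //; apply/imsetP => -[k _ e]; move: (qst_f k); rewrite -e eqxx //.
Qed.

Lemma step_inv p N b j v y : det_step (T_ n) (qst p, mkS N b) j v y ->
  y = qmove p N j \/ [/\ j <= p, ~~ flag N j & y = fmove p N j].
Proof.
case: y => y1 y2 H; have [H1 _ _] := H; move: H1; rewrite /= Tq.
case/orP => [/andP [/eqP e1 /eqP e2] | /and3P [/eqP e1 jp /eqP e2]]; subst.
  left; have [_ /= -> _] := (det_stepE (fun q' => RHS_q p N b j q')).1 H.
  by [].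
right; have [_ /= e3 h3] := (det_stepE (fun q' => RHS_f p N b j q')).1 H.
have fl : ~~ flag N j by move: h3; rewrite in_setU f_mkS negb_or => /andP [].
by split => //; rewrite e3 fmove_eq.
Qed.

Definition lt_set (k : 'I_n) : {set 'I_n} := [set i : 'I_n | i < k].

Lemma RHS_s j (k : 'I_n) (q' : Tstate n) :
  q' \in mkS (lt_set k) false <-> RHS (T_ n) (st_s n, set0) j k q'.
Proof.
rewrite /RHS /= mkS_false; split.
  move/imsetP => [i]; rewrite inE => ik ->; right; exists i; split => //.
  by rewrite Ts val_qst /= eqxx andbT; have := ltn_ord i; lia.
move=> [[q]|[v' [lt]]]; first by rewrite inE.
rewrite Ts => /andP [/andP [h1 h2] /eqP e].
have hi : q'.-1 < n by lia.
have -> : q' = qst (Ordinal hi) by apply: val_inj; rewrite /= val_qst /=; lia.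
by apply: imset_f; rewrite inE /=; lia.
Qed.

Lemma step_s j (k : 'I_n) : det_step (T_ n) (st_s n, set0) j k (qst k, mkS (lt_set k) false).
Proof.
apply/(det_stepE (fun q' => RHS_s j k q')); split => //=.
  by rewrite Ts val_qst /= eqxx andbT; have := ltn_ord k; lia.
by rewrite qst_mkS inE ltnn.
Qed.

Lemma step_s_inv j v y : det_step (T_ n) (st_s n, set0) j v y ->
  exists k : 'I_n, y = (qst k, mkS (lt_set k) false).
Proof.
case: y => y1 y2 H; have [H1 _ _] := H; move: H1; rewrite /= Ts => /andP [/andP [h1 h2] /eqP e].
have hi : y1.-1 < n by lia.
have ey : y1 = qst (Ordinal hi) by apply: val_inj; rewrite /= val_qst /=; lia.
exists (Ordinal hi); subst.
have [_ /= e2 _] := (det_stepE (fun q' => RHS_s j (Ordinal hi) q')).1 H.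
by rewrite e2 -ey.
Qed.

Lemma step_f_none j v x y : x.1 = st_f n -> ~ det_step (T_ n) x j v y.
Proof. by move=> e [H _ _]; move: H; rewrite /= e Tf. Qed.

Local Notation D := (det (T_ n) (st_s n)).
Local Notation G := (det_gen (T_ n) (st_s n)).

Lemma gen_acc x : G x -> accessible D x.
Proof.
elim => [|x0 a v y hx IH hs]; first by apply: acc0 => //; exact: det_gen0.
by apply: (accS (a := a) (v := v) IH); split.
Qed.

Lemma kept_of x : G x -> coaccessible D x -> kept D x.
Proof. by move=> hg hc; split => //; exact: gen_acc. Qed.

Lemma coacc_step x a v y : G x -> det_step (T_ n) x a v y -> coaccessible D y -> coaccessible D x.
Proof. by move=> hg hs hc; apply: (coaccS (p := x) (a := a) (v := v) (q := y)). Qed.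

Lemma final_f M : G (st_f n, qst @: M) -> coaccessible D (st_f n, qst @: M).
Proof.
move=> hg; apply: coacc0 => //; split => //= q /imsetP [k _ ->] e.
by move: (qst_f k); rewrite e eqxx.
Qed.

Lemma mem_sg j x N : (sg j x \in sg j @: N) = (x \in N).
Proof. by rewrite mem_imset //; exact: perm_inj. Qed.

Local Notation l := (@ord_max m).

Lemma flag_l N : l \notin N -> ~~ flag N l.
Proof.
move=> lN; apply/existsP => -[k /andP [kN lk]].
have e : k = l by apply: val_inj; apply/eqP; rewrite eqn_leq lk andbT -ltnS ltn_ord.
by move: lN; rewrite -e kN.
Qed.

Lemma coacc_q p N b : G (qst p, mkS N b) -> p \notin N -> coaccessible D (qst p, mkS N b).
Proof.
have Hl : forall N b, G (qst l, mkS N b) -> l \notin N -> coaccessible D (qst l, mkS N b).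
  move=> N' b' hg hl.
  have hs := step_f b' (leqnn l) (flag_l hl).
  apply: (coacc_step hg hs); apply: final_f; exact: det_genS hg hs.
have H0 : forall N b, G (qst ord0, mkS N b) -> ord0 \notin N -> coaccessible D (qst ord0, mkS N b).
  move=> N' b' hg h0; case: (ord0 =P l) => [e|ne].
    by move: hg h0; rewrite e; exact: Hl.
  have hs := step_q b' l h0.
  apply: (coacc_step hg hs); rewrite /qmove /sg tpermL; apply: Hl.
    by have := det_genS hg hs; rewrite /qmove /sg tpermL.
  by rewrite -{1}(tpermL ord0 l) -/(sg l) mem_sg.
move=> hg hp; case: (p =P l) => [e|nl]; first by move: hg hp; rewrite e; exact: Hl.
case: (p =P ord0) => [e|n0]; first by move: hg hp; rewrite e; exact: H0.
have hs := step_q b p hp.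
apply: (coacc_step hg hs); rewrite /qmove /sg tpermR; apply: H0.
  by have := det_genS hg hs; rewrite /qmove /sg tpermR.
by rewrite -{1}(tpermR ord0 p) -/(sg p) mem_sg.
Qed.

Lemma kept_q p N b : G (qst p, mkS N b) -> p \notin N -> kept D (qst p, mkS N b).
Proof. by move=> hg hp; apply: kept_of => //; exact: coacc_q. Qed.

Lemma kept_f M : G (st_f n, qst @: M) -> kept D (st_f n, qst @: M).
Proof. by move=> hg; apply: kept_of => //; exact: final_f. Qed.

Lemma gen_s : G (st_s n, set0).
Proof. exact: det_gen0. Qed.

Lemma gen_lt k : G (qst k, mkS (lt_set k) false).
Proof. exact: det_genS gen_s (step_s ord0 k). Qed.

Lemma lt_set_notin k : k \notin lt_set k.
Proof. by rewrite inE ltnn. Qed.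

Lemma kept_s : kept D (st_s n, set0).
Proof.
apply: kept_of; first exact: gen_s.
apply: (coacc_step gen_s (step_s ord0 ord0)); apply: coacc_q; [exact: gen_lt | exact: lt_set_notin].
Qed.

Definition realize (w : seq 'I_n) : {perm 'I_n} := (\prod_(j <- w) sg j)%g.

Lemma realize_nil : realize [::] = 1%g.
Proof. by rewrite /realize big_nil. Qed.
Lemma realize_cons j w : realize (j :: w) = (sg j * realize w)%g.
Proof. by rewrite /realize big_cons. Qed.
Lemma realize_cat w1 w2 : realize (w1 ++ w2) = (realize w1 * realize w2)%g.
Proof. by rewrite /realize big_cat. Qed.

Lemma im1 N : (1%g : {perm 'I_n}) @: N = N.
Proof. by rewrite (eq_imset _ (@perm1 _)) imset_id. Qed.
Lemma imM (r1 r2 : {perm 'I_n}) N : (r1 * r2)%g @: N = r2 @: (r1 @: N).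
Proof. by rewrite -imset_comp; apply: eq_imset => x; rewrite permM. Qed.

Lemma gen_word w p N b : G (qst p, mkS N b) -> p \notin N ->
  exists b', G (qst (realize w p), mkS (realize w @: N) b').
Proof.
elim: w p N b => [|j w IH] p N b hg hp.
  by exists b; rewrite realize_nil perm1 im1.
have hs := step_q b j hp.
have hp' : sg j p \notin sg j @: N by rewrite mem_sg.
have [b' hb'] := IH _ _ _ (det_genS hg hs) hp'.
by exists b'; rewrite realize_cons permM imM.
Qed.

Definition star (x y : 'I_n) : seq 'I_n :=
  if x == y then [::] else if x == ord0 then [:: y] else if y == ord0 then [:: x] else [:: x; y; x].

Lemma realize_star (x y : 'I_n) : realize (star x y) = tperm x y.
Proof.
rewrite /star; case: (x =P y) => [->|xy]; first by rewrite realize_nil tperm1.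
case: (x =P ord0) => [->|x0]; first by rewrite realize_cons realize_nil mulg1.
case: (y =P ord0) => [->|y0]; first by rewrite realize_cons realize_nil mulg1 /sg tpermC.
have h0x : ord0 != x by apply/eqP => e; apply: x0; rewrite e.
have h0y : ord0 != y by apply/eqP => e; apply: y0; rewrite e.
have hxy : x != y by apply/eqP.
have hyx : y != x by apply/eqP => e; apply: xy; rewrite e.
rewrite !realize_cons realize_nil mulg1; apply/permP => z; rewrite !permM /sg.
case: (tpermP x y z) => [->|->|h1 h2].
- by rewrite tpermR tpermL tpermD.
- by rewrite (tpermD h0y hxy) tpermR tpermL.
- case: (z =P ord0) => [->|z0].
    by rewrite tpermL (tpermD h0x hyx) tpermR.
  have hz0 : ord0 != z by apply/eqP => e; apply: z0; rewrite e.
  have hxz : x != z by apply/eqP => e; apply: h1; rewrite e.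
  have hyz : y != z by apply/eqP => e; apply: h2; rewrite e.
  by rewrite !tpermD.
Qed.

Definition word_of (r : {perm 'I_n}) : seq 'I_n :=
  flatten [seq star t.1 t.2 | t <- sval (prod_tpermP r)].

Lemma realize_word r : realize (word_of r) = r.
Proof.
rewrite /word_of; case: (prod_tpermP r) => ts e _ /=; rewrite e; clear e.
elim: ts => [|t ts IH] /=; first by rewrite realize_nil big_nil.
by rewrite realize_cat IH realize_star big_cons.
Qed.

Lemma card_lt (k : nat) (hk : k <= n) : #|[set i : 'I_n | i < k]| = k.
Proof.
have -> : [set i : 'I_n | i < k] = [set widen_ord hk i | i : 'I_k].
  apply/setP => i; rewrite inE; apply/idP/imsetP => [ik|[j _ ->]] /=; last exact: ltn_ord.
  by exists (Ordinal ik) => //; apply: val_inj.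
rewrite card_imset ?card_ord //; by move=> a c e; apply: val_inj; move: e => /(congr1 val).
Qed.

Lemma gen_pair p N : p \notin N -> exists b, G (qst p, mkS N b).
Proof.
move=> hp.
have kn : #|N| < n.
  have : N \subset ~: [set p].
    by apply/subsetP => x xN; rewrite !inE; apply/eqP => e; move: hp; rewrite -e xN.
  move/subset_leq_card; rewrite cardsC1 card_ord /=; lia.
pose kk := Ordinal kn.
have ck : #|lt_set kk| = #|N| by rewrite /lt_set card_lt // ltnW.
have [r1 hr1] := exists_perm ck.
pose r := (r1 * tperm (r1 kk) p)%g.
have [b hb] := gen_word (word_of r) (gen_lt kk) (lt_set_notin kk).
exists b; move: hb; rewrite realize_word.
have e1 : r kk = p by rewrite permM tpermL.
have r1N : r1 kk \notin N by rewrite -hr1 mem_imset ?lt_set_notin //; exact: perm_inj.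
have e2 : r @: lt_set kk = N.
  rewrite imM hr1 -[X in _ = X]imset_id; apply: eq_in_imset => x xN; apply: tpermD.
    by apply/eqP => e; move: r1N; rewrite e xN.
  by apply/eqP => e; move: hp; rewrite e xN.
by rewrite e1 e2.
Qed.

Lemma cardsU_disj (T : finType) (A B : {set T}) :
  (forall x, x \in A -> x \notin B) -> #|A :|: B| = #|A| + #|B|.
Proof.
move=> h; rewrite cardsU; have -> : A :&: B = set0.
  by apply/setP => x; rewrite !inE; case xA: (x \in A) => //=; apply/negbTE/h.
by rewrite cards0 subn0.
Qed.

Lemma sgl_l : sg l ord0 = l.
Proof. by rewrite /sg tpermL. Qed.
Lemma sgl_l' : sg l l = ord0.
Proof. by rewrite /sg tpermR. Qed.
Lemma sgsg j N : sg j @: (sg j @: N) = N.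
Proof. by rewrite -imM /sg tperm2 im1. Qed.

Lemma l_notin N : ord0 \notin N -> l \notin sg l @: N.
Proof. by rewrite -{1}sgl_l mem_sg. Qed.

Lemma gen_F1 p N : p \notin N -> G (qst p, mkS N (N != set0)).
Proof.
move=> hp; have [b hb] := gen_pair hp.
have := det_genS hb (step_q b ord0 hp).
by rewrite /qmove sg0 perm1 im1 flag_ord0.
Qed.

Lemma gen_F2 N : ord0 \notin N -> G (qst ord0, mkS N false).
Proof.
move=> h0; have hl := l_notin h0; have [b hb] := gen_pair hl.
have := det_genS hb (step_q b l hl).
by rewrite /qmove sgl_l' sgsg (negbTE (flag_l hl)).
Qed.

Lemma gen_F3 N : ord0 \notin N -> G (st_f n, qst @: (ord0 |: N)).
Proof.
move=> h0; have hl := l_notin h0; have [b hb] := gen_pair hl.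
have := det_genS hb (step_f b (leqnn l) (flag_l hl)).
by rewrite /fmove; have -> : sg l @: (l |: sg l @: N) = ord0 |: N by rewrite imsetU1 sgl_l' sgsg.
Qed.

Lemma notin_pow N : (N \in powerset (~: [set ord0])) = (ord0 \notin N).
Proof. by rewrite powersetE subsetC sub1set inE. Qed.

Lemma part1 : exists S : {set Tstate n * {set Tstate n}},
  (2 * n + 3) * 2 ^ n <= 4 * #|S| /\ forall x, x \in S -> kept D x.
Proof.
pose D1 := [set pN : 'I_n * {set 'I_n} | pN.1 \notin pN.2].
pose F1 := [set (qst pN.1, mkS pN.2 (pN.2 != set0)) | pN in D1].
pose D2 := powerset (~: [set (ord0 : 'I_n)]) :\ set0.
pose F2 := [set (qst ord0, mkS N false) | N in D2].
pose D3 := powerset (~: [set (ord0 : 'I_n)]).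
pose F3 := [set (st_f n, qst @: (ord0 |: N)) | N in D3].
exists ((st_s n, set0) |: (F1 :|: F2 :|: F3)); split; last first.
  move=> x; rewrite !inE => /orP [/eqP ->|/orP [/orP [/imsetP [[p N] /= hp ->]|/imsetP [N hN ->]]|/imsetP [N hN ->]]].
  - exact: kept_s.
  - by move: hp; rewrite inE /= => hp; apply: kept_q => //; exact: gen_F1.
  - move: hN; rewrite in_setD1 notin_pow => /andP [_ hN].
    by apply: kept_q; [exact: gen_F2 | rewrite hN].
  - by move: hN; rewrite notin_pow => hN; apply: kept_f; exact: gen_F3.
have cD1 : #|D1| = n * 2 ^ m.
  rewrite -sum1_card.
  rewrite (eq_bigl (fun pN : 'I_n * {set 'I_n} => true && (pN.1 \notin pN.2))); last by move=> x; rewrite inE.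
  rewrite -(pair_big_dep xpredT (fun p N => p \notin N) (fun _ _ => 1)) /=.
  rewrite (eq_bigr (fun _ => 2 ^ m)) ?sum_nat_const ?card_ord //.
  move=> p _; rewrite sum1_card.
  have -> : #|(fun N : {set 'I_n} => p \notin N)| = #|powerset (~: [set p])|.
    by apply: eq_card => N; rewrite powersetE subsetC sub1set inE.
  by rewrite card_powerset cardsC1 card_ord.
have cF1 : #|F1| = n * 2 ^ m.
  rewrite card_in_imset // => -[p N] [p' N'] _ _ [/qst_inj -> /mkS_inj [-> _]] //.
have cD3 : #|D3| = 2 ^ m by rewrite card_powerset cardsC1 card_ord.
have cF2 : #|F2| = 2 ^ m - 1.
  rewrite card_in_imset; last by move=> N N' _ _ [/mkS_inj []].
  have := cardsD1 set0 D3; rewrite -/D2 cD3 notin_pow inE /= => ->; by rewrite addKn.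
have cF3 : #|F3| = 2 ^ m.
  rewrite card_in_imset ?cD3 // => N N'; rewrite !notin_pow => h h' [/(imset_inj qst_inj) e].
  by rewrite -(setU1K h) e setU1K.
rewrite cardsU1 cardsU_disj; last first.
  move=> x; rewrite in_setU => /orP [] /imsetP [?] _ ->; apply/imsetP => -[? _ [e _]]; by move/eqP: e; rewrite qst_f.
rewrite cardsU_disj; last first.
  move=> x /imsetP [[p N]]; rewrite inE /= => hp ->; apply/imsetP => -[N' hN' [_ /mkS_inj [e1 e2]]].
  by move: hN'; rewrite in_setD1 -e1 e2.
have -> : (st_s n, set0) \notin F1 :|: F2 :|: F3.
  rewrite !inE; apply/negP => /orP [/orP []|] /imsetP [? _ [e _]]; first [by move/eqP: e; rewrite eq_sym qst_s | by []].
rewrite cF1 cF2 cF3 expnS.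
move: (2 ^ m) (expn_gt0 2 m) => X hX; nia.
Qed.

Local Notation X := (Tstate n * {set Tstate n})%type.
Local Notation UM := (underlying (T'_ n)).

Definition Next (P : {set X}) (a : 'I_n) : {set X} :=
  [set q | pb (exists2 p, p \in P & atrans UM p a q)].
Definition R0 : {set X} := [set q | pb (astate UM q /\ ainit UM q)].
Definition R (w : seq 'I_n) := foldl Next R0 w.

Lemma R_reach w : subset_reach UM (R w).
Proof.
rewrite /R; have : subset_reach UM R0 by apply: sr_init => q; rewrite inE pbP.
elim: w R0 => [|a w IH] P hP //=; apply: IH.
by apply: (sr_step (a := a) hP) => q; rewrite inE pbP.
Qed.

Lemma in_Next P a y : y \in Next P a <->
  exists2 x, x \in P & exists v, [/\ G x /\ det_step (T_ n) x a v y, kept D x & kept D y].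
Proof. by rewrite inE pbP. Qed.

Lemma in_R0 x : x \in R0 <-> x = (st_s n, set0).
Proof.
rewrite inE pbP /=; split => [[_ [-> _]] //|->]; split; first exact: kept_s.
by split => //; exact: kept_s.
Qed.

Definition AllKept (P : {set X}) := forall x, x \in P -> kept D x.
Definition Inv (r : {perm 'I_n}) (P : {set X}) := forall y, y \in P ->
  y.1 != st_s n /\ (y.1 != st_f n -> exists i b, y = (qst (r i), mkS (r @: lt_set i) b)).
Definition Pos (r : {perm 'I_n}) (P : {set X}) :=
  forall i, exists b, (qst (r i), mkS (r @: lt_set i) b) \in P.

Lemma Next_kept P a : AllKept (Next P a).
Proof. by move=> y /in_Next [x _ [v [_ _ ]]]. Qed.

Lemma R1_props : [/\ Inv 1 (R [:: ord0]), Pos 1 (R [:: ord0]), AllKept (R [:: ord0]) &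
  forall y, y \in R [:: ord0] -> y.1 != st_f n].
Proof.
have H : forall y, y \in R [:: ord0] -> exists k, y = (qst k, mkS (lt_set k) false).
  move=> y /in_Next [x /in_R0 -> [v [[_ hs] _ _]]]; exact: step_s_inv hs.
split.
- move=> y /H [k ->] /=; rewrite qst_s qst_f; split => // _.
  by exists k, false; rewrite perm1 im1.
- move=> i; exists false; rewrite perm1 im1; apply/in_Next; exists (st_s n, set0); first by apply/in_R0.
  exists i; split; [by split; [exact: gen_s | exact: step_s] | exact: kept_s | ].
  apply: kept_q; [exact: gen_lt | exact: lt_set_notin].
- exact: Next_kept.
- by move=> y /H [k ->] /=; rewrite qst_f.
Qed.

Lemma Next_props r P j : Inv r P -> Pos r P -> AllKept P ->
  [/\ Inv (r * sg j)%g (Next P j), Pos (r * sg j)%g (Next P j) & AllKept (Next P j)].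
Proof.
move=> hI hP hK; split; last exact: Next_kept.
- move=> y /in_Next [x xP [v [[_ hs] _ _]]].
  have [xs xf] := hI x xP.
  case: (x.1 =P st_f n) => [e|/eqP ne]; first by case: (step_f_none e hs).
  have [i [b ex]] := xf ne; rewrite ex in hs.
  case: (step_inv hs) => [->|[_ _ ->]] /=; last by split => //; rewrite eqxx.
  rewrite qst_s; split => // _; exists i, (flag (r @: lt_set i) j).
  by rewrite permM imM.
- move=> i; have [b hb] := hP i; exists (flag (r @: lt_set i) j).
  have hp : r i \notin r @: lt_set i by rewrite mem_imset ?lt_set_notin //; exact: perm_inj.
  have hk := hK _ hb; have [hg _ _] := hk.
  have hs := step_q b j hp.
  apply/in_Next; exists (qst (r i), mkS (r @: lt_set i) b) => //; exists (vq (r i) j); split => //.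
    by rewrite permM imM.
  have hs' : sg j (r i) \notin sg j @: (r @: lt_set i) by rewrite mem_sg.
  rewrite permM imM; apply: kept_q hs'; exact: det_genS hg hs.
Qed.

Lemma fold_props w r P : Inv r P -> Pos r P -> AllKept P ->
  [/\ Inv (r * realize w)%g (foldl Next P w), Pos (r * realize w)%g (foldl Next P w)
    & AllKept (foldl Next P w)].
Proof.
elim: w r P => [|j w IH] r P hI hP hK /=; first by rewrite realize_nil mulg1.
have [hI' hP' hK'] := Next_props j hI hP hK.
by rewrite realize_cons mulgA; apply: IH.
Qed.

Definition Xp (r : {perm 'I_n}) := R (ord0 :: word_of r ++ [:: ord0]).

Lemma Xp_props r : [/\ Inv r (Xp r), Pos r (Xp r) & exists2 y, y \in Xp r & y.1 = st_f n].
Proof.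
have [hI hP hK _] := R1_props.
have := fold_props (word_of r ++ [:: ord0]) hI hP hK.
rewrite realize_cat realize_word realize_cons realize_nil sg0 !mulg1 mul1g => -[hI' hP' _].
split => //.
have [hI2 hP2 hK2] := fold_props (word_of r) hI hP hK; rewrite mul1g realize_word in hI2 hP2.
rewrite /Xp /R /= foldl_cat /=.
have [b hb] := hP2 ord0.
have e0 : lt_set ord0 = set0 by apply/setP => x; rewrite !inE.
rewrite e0 imset0 in hb.
have [hg _ _] := hK2 _ hb.
have hs := @step_f (r ord0) set0 b ord0 (leq0n _) (negbT (flag0 ord0)).
exists (fmove (r ord0) set0 ord0) => //; apply/in_Next; exists (qst (r ord0), mkS set0 b) => //.
exists (2 * n - r ord0); split => //; first exact: hK2.
apply: kept_f; exact: det_genS hg hs.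
Qed.

Lemma card_lt_set i : #|lt_set i| = i.
Proof. by rewrite /lt_set card_lt // ltnW. Qed.

Lemma Xp_inj : injective Xp.
Proof.
move=> r r' e; apply/permP => i.
have [_ hP _] := Xp_props r; have [hI' _ _] := Xp_props r'.
have [b hb] := hP i; rewrite e in hb.
have [_ h] := hI' _ hb; have [i' [b' /= [/qst_inj e1 /mkS_inj [e2 _]]]] := h (negbT (qst_f _)).
have ei : i = i'.
  apply: val_inj; rewrite /= -(card_lt_set i) -(card_lt_set i').
  by rewrite -(card_imset _ (@perm_inj _ r)) e2 card_imset //; exact: perm_inj.
by rewrite e1 ei.
Qed.

Lemma part2 : exists S : {set {set X}}, n`! + 2 <= #|S| /\ forall P, P \in S -> subset_reach UM P.
Proof.
exists (R [::] |: (R [:: ord0] |: [set Xp r | r : {perm 'I_n}])); split; last first.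
  move=> P; rewrite !inE => /orP [/eqP ->|/orP [/eqP ->|/imsetP [r _ ->]]]; exact: R_reach.
have [hI1 _ _ hf1] := R1_props.
have s0 : (st_s n, set0) \in R [::] by apply/in_R0.
rewrite cardsU1 cardsU1 card_imset; last exact: Xp_inj.
have -> : R [:: ord0] \notin [set Xp r | r : {perm 'I_n}].
  apply/imsetP => -[r _ e]; have [_ _ [y hy hyf]] := Xp_props r.
  by move: (hf1 y); rewrite e hy hyf eqxx => /(_ isT).
have -> : R [::] \notin R [:: ord0] |: [set Xp r | r : {perm 'I_n}].
  rewrite !inE; apply/negP => /orP [/eqP e|/imsetP [r _ e]].
    by move: s0; rewrite e => /hI1 [h _]; move/eqP: h.
  have [hI _ _] := Xp_props r.
  by move: s0; rewrite e => /hI [h _]; move/eqP: h.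
rewrite card_Sn /=; lia.
Qed.

Local Notation RM := (reversal (underlying (T'_ n))).

Definition Prev (P : {set X}) (a : 'I_n) : {set X} :=
  [set q | pb (exists2 p, p \in P & atrans RM p a q)].
Definition P0 : {set X} := [set q | pb (astate RM q /\ ainit RM q)].
Definition Pv (u : seq 'I_n) := foldr (fun a P => Prev P a) P0 u.

Lemma Pv_reach u : subset_reach RM (Pv u).
Proof.
elim: u => [|a u IH] /=; first by apply: sr_init => q; rewrite inE pbP.
by apply: (sr_step (a := a) IH) => q; rewrite inE pbP.
Qed.

Lemma in_Prev P a x : x \in Prev P a <->
  exists2 y, y \in P & exists v, [/\ G x /\ det_step (T_ n) x a v y, kept D x & kept D y].
Proof. by rewrite inE pbP. Qed.

Lemma in_P0 x : x \in P0 <-> kept D x /\ [/\ G x, x.1 = st_f n & forall q, q \in x.2 -> ~ q = st_f n].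
Proof. by rewrite inE pbP /=; split => [[h [h1 _]]|[h h1]]. Qed.

Lemma Pv_kept u x : x \in Pv u -> kept D x.
Proof. by case: u => [/in_P0 []|a u /in_Prev [y _ [v []]]]. Qed.

Lemma Prev_nf P a x : x \in Prev P a -> x.1 != st_f n.
Proof.
move=> /in_Prev [y _ [v [[_ hs] _ _]]]; apply/eqP => e; exact: step_f_none e hs.
Qed.

Lemma Pv_nf u x : u != [::] -> x \in Pv u -> x.1 != st_f n.
Proof. by case: u => // a u _; exact: Prev_nf. Qed.

Lemma fmove_P0 p N b j : G (qst p, mkS N b) -> j <= p -> ~~ flag N j -> fmove p N j \in P0.
Proof.
move=> hg jp fl; have hg' := det_genS hg (step_f b jp fl).
apply/in_P0; split; first exact: kept_f.
split => // q /imsetP [k _ ->] e; by move/eqP: e; rewrite qst_f.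
Qed.

Definition e_ p := (qst p, mkS set0 false).

Lemma gen_e p : G (e_ p).
Proof.
have h0 : lt_set ord0 = set0 by apply/setP => x; rewrite !inE.
have := det_genS (gen_lt ord0) (step_q false p (lt_set_notin ord0)).
by rewrite /qmove /e_ h0 imset0 flag0 /sg tpermL.
Qed.

Lemma kept_e p : kept D (e_ p).
Proof. by apply: kept_q; [exact: gen_e | rewrite inE]. Qed.

Lemma qmove_e p a : qmove p set0 a = e_ (sg a p).
Proof. by rewrite /qmove imset0 flag0. Qed.

Lemma e_in_iff w p j : e_ p \in Pv (w ++ [:: j]) <-> j <= realize w p.
Proof.
elim: w p => [|a w IH] p /=.
  rewrite realize_nil perm1; split.
    move=> /in_Prev [y /in_P0 [_ [_ y1 _]] [v [[_ hs] _ _]]].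
    case: (step_inv hs) => [e|[]] //; by move: y1; rewrite e /= => /eqP; rewrite qst_f.
  move=> jp; apply/in_Prev; exists (fmove p set0 j).
    by apply: fmove_P0 => //; [exact: gen_e | rewrite flag0].
  exists (2 * n - p); split; [split; [exact: gen_e | exact: (step_f false jp (negbT (flag0 j)))] | exact: kept_e | ].
  by apply: kept_f; apply: det_genS (gen_e p) (step_f false jp (negbT (flag0 j))).
rewrite realize_cons permM -IH; split.
  move=> /in_Prev [y hy [v [[_ hs] _ _]]].
  case: (step_inv hs) => [e|[_ _ e]]; first by rewrite -qmove_e -e.
  have hne : w ++ [:: j] != [::] by case: (w).
  by move: (Pv_nf hne hy); rewrite e eqxx.
move=> h; apply/in_Prev; exists (e_ (sg a p)) => //.
exists (vq p a); split; [split; [exact: gen_e | ] | exact: kept_e | exact: kept_e].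
by rewrite -qmove_e; apply: step_q; rewrite inE.
Qed.

Lemma gen_path w p N b j : G (qst p, mkS N b) -> p \notin N -> j <= realize w p ->
  (forall k, k \in N -> realize w k < j) -> (qst p, mkS N b) \in Pv (w ++ [:: j]).
Proof.
elim: w p N b => [|a w IH] p N b hg hp hj hN /=.
  move: hj hN; rewrite realize_nil perm1 => hj hN.
  have fl : ~~ flag N j.
    apply/existsP => -[k /andP [kN jk]]; have := hN k kN; rewrite perm1; lia.
  apply/in_Prev; exists (fmove p N j); first exact: fmove_P0 hg hj fl.
  exists (2 * n - p); split; [split; [exact: hg | exact: (step_f b hj fl)] | exact: kept_q hg hp | ].
  apply: kept_f; exact: det_genS hg (step_f b hj fl).
have hs := step_q b a hp.
have hp' : sg a p \notin sg a @: N by rewrite mem_sg.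
apply/in_Prev; exists (qmove p N a).
  apply: IH => //; first exact: det_genS hg hs.
    by move: hj; rewrite realize_cons permM.
  move=> k /imsetP [k' k'N ->]; have := hN k' k'N; by rewrite realize_cons permM.
exists (vq p a); split; [by [] | exact: kept_q | ].
apply: kept_q hp'; exact: det_genS hg hs.
Qed.

Lemma s_notin_1 j : (st_s n, set0) \notin Pv [:: j].
Proof.
apply/negP => /in_Prev [y /in_P0 [_ [_ y1 _]] [v [[_ hs] _ _]]].
have [k e] := step_s_inv hs; by move: y1; rewrite e /= => /eqP; rewrite qst_f.
Qed.

Definition f0 := fmove ord0 set0 ord0.
Lemma f0_P0 : f0 \in P0.
Proof.
have h0 : lt_set ord0 = set0 by apply/setP => x; rewrite !inE.
apply: fmove_P0 => //; last by rewrite flag0.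
by have := gen_lt ord0; rewrite h0; exact.
Qed.

Definition Uset (T : {set 'I_n}) := [set i : 'I_n | n - #|T| <= i].
Definition rhoT (T : {set 'I_n}) : {perm 'I_n} := odflt 1%g [pick r : {perm 'I_n} | r @: T == Uset T].
Definition jT (T : {set 'I_n}) : 'I_n := inord (n - #|T|).
Definition LT (T : {set 'I_n}) := Pv (ord0 :: word_of (rhoT T) ++ [:: jT T]).

Lemma rhoT_spec T : rhoT T @: T = Uset T.
Proof.
rewrite /rhoT; case: pickP => [r /eqP //|H].
have cT : #|T| <= n by have := subset_leq_card (subsetT T); rewrite cardsT card_ord.
have : #|T| = #|Uset T|.
  have := cardsC (Uset T); rewrite card_ord.
  have -> : ~: Uset T = [set i : 'I_n | i < n - #|T|] by apply/setP => i; rewrite !inE -ltnNge.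
  rewrite card_lt; last by lia.
  lia.
by move/exists_perm => [r hr]; move: (H r); rewrite hr eqxx.
Qed.

Lemma jT_val T : T != set0 -> nat_of_ord (jT T) = n - #|T|.
Proof. by move=> h; rewrite /jT inordK //; move: h; rewrite -card_gt0; lia. Qed.

Lemma e_LT T p : T != set0 -> (e_ p \in LT T) = (p \in T).
Proof.
move=> hT; apply/idP/idP.
  rewrite /LT -cat_cons => /e_in_iff; rewrite realize_cons sg0 mul1g realize_word => h.
  rewrite -(mem_imset _ _ (@perm_inj _ (rhoT T))) rhoT_spec inE -(jT_val hT); exact: h.
move=> pT; rewrite /LT -cat_cons; apply/e_in_iff.
rewrite realize_cons sg0 mul1g realize_word.
have : rhoT T p \in Uset T by rewrite -rhoT_spec; apply: imset_f.
by rewrite inE -(jT_val hT).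
Qed.

Lemma s_LT T : T != set0 -> (st_s n, set0) \in LT T.
Proof.
move=> hT; have [i0 i0T] := set0Pn _ hT.
case: (@arg_minnP _ i0 (mem T) (@nat_of_ord n) i0T) => k kT kmin.
apply/in_Prev; exists (qst k, mkS (lt_set k) false).
  apply: gen_path; [exact: gen_lt | exact: lt_set_notin | | ].
    rewrite realize_word.
    have : rhoT T k \in Uset T by rewrite -rhoT_spec; apply: imset_f.
    by rewrite inE -(jT_val hT).
  move=> l; rewrite inE realize_word => lk.
  have lT : l \notin T by apply/negP => /kmin; lia.
  have : rhoT T l \notin Uset T by rewrite -rhoT_spec mem_imset //; exact: perm_inj.
  by rewrite inE -(jT_val hT) -ltnNge.
exists k; split; [split; [exact: gen_s | exact: step_s] | exact: kept_s | ].
apply: kept_q; [exact: gen_lt | exact: lt_set_notin].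
Qed.

Lemma part3 : exists S : {set {set X}}, 2 ^ n + n <= #|S| /\ forall P, P \in S -> subset_reach RM P.
Proof.
pose DT := powerset [set: 'I_n] :\ set0.
have inDT T : (T \in DT) = (T != set0) by rewrite in_setD1 powersetE subsetT andbT.
pose SB := [set Pv [:: j] | j : 'I_n].
pose SA := [set LT T | T in DT].
exists (P0 |: (SB :|: SA)); split; last first.
  move=> P; rewrite !inE => /orP [/eqP ->|/orP [/imsetP [j _ ->]|/imsetP [T _ ->]]]; [exact: (Pv_reach [::]) | exact: Pv_reach | exact: Pv_reach].
have key : forall j p, (e_ p \in Pv [:: j]) = (j <= p).
  move=> j p; have := @e_in_iff [::] p j; rewrite realize_nil perm1 /= => h.
  by apply/idP/idP => /h.
have cSB : #|SB| = n.
  rewrite card_imset ?card_ord // => j j' e.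
  have h1 : j' <= j by rewrite -key -e key.
  have h2 : j <= j' by rewrite -key e key.
  by apply: val_inj; apply/eqP; rewrite eqn_leq h1 h2.
have cSA : #|SA| = 2 ^ n - 1.
  rewrite card_in_imset; last first.
    move=> T T'; rewrite !inDT => hT hT' e; apply/setP => p; by rewrite -(e_LT p hT) e e_LT.
  have h0 : set0 \in powerset [set: 'I_n] by rewrite powersetE sub0set.
  have := cardsD1 set0 (powerset [set: 'I_n]); rewrite -/DT card_powerset cardsT card_ord h0 => ->.
  by rewrite addKn.
have f0P : f0 \in P0 := f0_P0.
have f0nf : f0.1 = st_f n by [].
rewrite cardsU1 cardsU_disj; last first.
  move=> P /imsetP [j _ ->]; apply/imsetP => -[T hT e].
  move: (s_notin_1 j); rewrite e s_LT //; by rewrite -inDT.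
have -> : P0 \notin SB :|: SA.
  rewrite in_setU; apply/negP => /orP [/imsetP [j _ e]|/imsetP [T _ e]].
    by move: (Prev_nf (P := P0) (a := j) (x := f0)); rewrite -[Prev P0 j]/(Pv [:: j]) -e f0P f0nf eqxx => /(_ isT).
  by move: (Prev_nf (P := Pv (word_of (rhoT T) ++ [:: jT T])) (a := ord0) (x := f0)); rewrite -[Prev _ _]/(LT T) -e f0P f0nf eqxx => /(_ isT).
rewrite cSB cSA /=; move: (2 ^ n) (expn_gt0 2 n) => Y hY; lia.
Qed.


End Main.

Theorem proposition9 (n : nat) (hn : 0 < n) :
  [/\ (* (1) T'_n has at least (2n+3) 2^(n-2) states *)
      (exists S : {set Tstate n * {set Tstate n}},
         (2 * n + 3) * 2 ^ n <= 4 * #|S| /\ forall x, x \in S -> tstate (T'_ n) x),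
      (* (2) subset construction of the underlying automaton: >= n! + 2 states *)
      (exists S : {set {set Tstate n * {set Tstate n}}},
         n`! + 2 <= #|S| /\ forall P, P \in S -> subset_reach (underlying (T'_ n)) P)
    & (* (3) subset construction of the reversed underlying automaton: >= 2^n + n states *)
      (exists S : {set {set Tstate n * {set Tstate n}}},
         2 ^ n + n <= #|S| /\
         forall P, P \in S -> subset_reach (reversal (underlying (T'_ n))) P)].
Proof.
case: n hn => [//|m] _.
split.
- have [S [h1 h2]] := part1 m; exists S; split => //.
- have [S [h1 h2]] := part2 m; exists S; split => //.
- have [S [h1 h2]] := part3 m; exists S; split => //.
Qed.
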